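(* Let $S=\{n_0<n_1<n_2<\cdots\}$ be an infinite subset of the positive integers with unbounded gaps, i.e. $\sup_i (n_{i+1}-n_i)=\infty$. Then the $S$-gap shift $X(S)$ does not admit a Gibbs state.
   Context: For nonempty $S$, the $S$-gap shift $X(S)\subseteq\{0,1\}^{\mathbb{Z}}$ is the set of bi-infinite binary sequences in which every maximal block of consecutive zeros (between two ones) has length belonging to $S$; typical points have the form $\cdots10^{n_{-1}}10^{n_0}10^{n_1}\cdots$ with $n_j\in S$. $\mathcal{B}_r(X)$ is the set of words of length $r$ occurring in points of $X$, $h(X)=\lim_r\frac1r\log|\mathcal{B}_r(X)|$ with $\log$ to base $2$, and $[\omega]$ is the cylinder set of points having $\omega$ at a fixed position. A Borel probability measure $\mu$ on $X$ is a Gibbs state if there exist $c_1,c_2>0$ such that for all words $\omega\in\mathcal{B}(X)$ of length $r$, $c_1\le\mu([\omega])\,2^{r h(X)}\le c_2$. *)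

(* Defs.v *)
From HB Require Import structures.
From mathcomp Require Import all_boot all_order all_algebra.
From mathcomp Require Import all_classical all_reals all_analysis.
Set Implicit Arguments. Unset Strict Implicit. Unset Printing Implicit Defensive.
Import Order.TTheory GRing.Theory Num.Theory.
Import numFieldNormedType.Exports.
Local Open Scope classical_set_scope.
Local Open Scope ring_scope.

(** Full shift {0,1}^Z ; [true] encodes the symbol 1, [false] the symbol 0.
    It carries the product topology of the discrete topology on [bool]. *)
Definition fullshift : Type := {ptws int -> bool}.

Definition borel_fullshift := g_sigma_algebraType (@open {ptws int -> bool}).

Definition gap_shift (S : set nat) : set fullshift :=
  [set x | forall i j : int, (i < j)%R -> x i = true -> x j = true ->
     (forall k : int, (i < k)%R -> (k < j)%R -> x k = false) ->
     S (absz (j - i - 1)%R) ].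

Definition occurs_at0 (r : nat) (w : r.-tuple bool) (x : fullshift) : Prop :=
  forall i : 'I_r, x (i%:Z) = tnth w i.

Definition cylinder (r : nat) (w : r.-tuple bool) : set fullshift :=
  [set x | occurs_at0 w x].

Definition occurs_in (r : nat) (w : r.-tuple bool) (x : fullshift) : Prop :=
  exists n : int, forall i : 'I_r, x (n + i%:Z) = tnth w i.

Definition language (X : set fullshift) (r : nat) : {set r.-tuple bool} :=
  [set w | `[< exists2 x, X x & occurs_in w x >] ].

Definition log2 {R : realType} (x : R) : R := ln x / ln 2.

Definition entropy {R : realType} (X : set fullshift) : R :=
  limn (fun r : nat => log2 (#|language X r|%:R : R) / r%:R).

(** Gibbs state: a Borel probability measure on X (i.e. giving full mass to X)
    with c1 <= mu([w]) 2^{r h(X)} <= c2 for all words w in B(X). *)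
Definition gibbs_state {R : realType} (X : set fullshift)
    (mu : probability borel_fullshift R) : Prop :=
  mu (X : set borel_fullshift) = 1%E /\
  exists c1 c2 : R, (0 < c1) /\ (0 < c2) /\
    forall (r : nat) (w : r.-tuple bool), w \in language X r ->
      (c1%:E <= mu (cylinder w : set borel_fullshift) * (powR 2 (r%:R * entropy X))%:E)%E /\
      (mu (cylinder w : set borel_fullshift) * (powR 2 (r%:R * entropy X))%:E <= c2%:E)%E.

(* Main.v *)
Require Import Defs.
From HB Require Import structures.
From mathcomp Require Import all_boot all_order all_algebra.
From mathcomp Require Import all_classical all_reals all_analysis.
From mathcomp Require Import zify ring lra.
Import Order.TTheory GRing.Theory Num.Theory.
Local Open Scope classical_set_scope.
Local Open Scope ring_scope.

Lemma nbhs_coord (x : fullshift) (f : int) : nbhs x [set y : fullshift | y f = x f].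
Proof.
have := @proj_continuous int (fun _ => bool) f x.
by move=> /(_ [set x f]) H; apply: H.
Qed.

Lemma nbhs_coords (x : fullshift) (F : seq int) :
  nbhs x [set y : fullshift | forall f, f \in F -> y f = x f].
Proof.
elim: F => [|a F IH].
  by apply: filterS (nbhs_coord x 0) => y _ f; rewrite in_nil.
apply: filterS (filterI (nbhs_coord x a) IH) => y [ya yF] f.
by rewrite in_cons => /orP[/eqP->|/yF].
Qed.

Lemma fin_det_open (F : seq int) (P : set fullshift) :
  (forall x y, (forall f, f \in F -> y f = x f) -> P x -> P y) -> open P.
Proof.
move=> H; rewrite openE => x Px.
rewrite /interior.
apply: filterS (nbhs_coords x F) => y yF; exact: H yF Px.
Qed.

Lemma fin_det_closed (F : seq int) (P : set fullshift) :
  (forall x y, (forall f, f \in F -> y f = x f) -> P x -> P y) -> closed P.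
Proof.
move=> H; rewrite -openC; apply: (@fin_det_open F) => x y xy nPx Py.
apply: nPx; apply: H Py => f /xy ->//.
Qed.

Lemma open_meas (P : set fullshift) : open P -> measurable (P : set borel_fullshift).
Proof. by move=> oP; apply: sub_sigma_algebra. Qed.

Lemma closed_meas (P : set fullshift) : closed P -> measurable (P : set borel_fullshift).
Proof.
move=> cP; rewrite -[P]setCK; apply: measurableC; apply: open_meas.
by rewrite openC.
Qed.

Definition segF (i j : int) : seq int :=
  [seq i + (m%:Z) | m <- iota 0 (absz (j - i)).+1].

Lemma segF_mem (i j k : int) : i <= k -> k <= j -> k \in segF i j.
Proof.
move=> ik kj; apply/mapP; exists (absz (k - i)).
  rewrite mem_iota add0n; lia.
lia.
Qed.

Lemma gap_shift_closed (S : set nat) : closed (gap_shift S).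
Proof.
have -> : gap_shift S = \bigcap_(p in [set: int * int])
   [set x : fullshift | (p.1 < p.2)%R -> x p.1 = true -> x p.2 = true ->
     (forall k : int, (p.1 < k)%R -> (k < p.2)%R -> x k = false) ->
     S (absz (p.2 - p.1 - 1)%R) ].
  apply/seteqP; split => x.
    by move=> Hx [i j] _ /=; exact: Hx.
  by move=> Hx i j; exact: (Hx (i, j)).
apply: closed_bigI => [[i j]] _ /=.
apply: (@fin_det_closed (segF i j)) => x y xy Px ij yi yj yk.
have lij : i <= j by exact: ltW.
apply: Px => //.
- by rewrite -xy ?segF_mem.
- by rewrite -xy ?segF_mem.
- move=> k ik kj; rewrite -xy ?segF_mem ?ltW //; exact: yk.
Qed.

Lemma gap_shift_meas (S : set nat) : measurable (gap_shift S : set borel_fullshift).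
Proof. apply: closed_meas; exact: gap_shift_closed. Qed.

Lemma cylinder_meas r (w : r.-tuple bool) : measurable (cylinder w : set borel_fullshift).
Proof.
apply: open_meas; apply: (@fin_det_open [seq (val i)%:Z | i <- enum 'I_r]).
move=> x y xy Px i; rewrite xy ?Px //.
by apply/mapP; exists i; rewrite ?mem_enum.
Qed.

Definition tw r (f : nat -> bool) : r.-tuple bool := [tuple f (val i) | i < r].

Lemma cyl_tw r f (x : fullshift) :
  cylinder (tw r f) x <-> forall m, (m < r)%N -> x m%:Z = f m.
Proof.
split.
  by move=> H m mr; have := H (Ordinal mr); rewrite tnth_mktuple.
by move=> H i; rewrite tnth_mktuple H.
Qed.

Definition pt (a : nat) : fullshift := fun k : int => k == a%:Z.

Lemma pt_in (S : set nat) a : gap_shift S (pt a).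
Proof.
move=> i j ij /eqP Hi /eqP Hj; by rewrite Hi Hj ltxx in ij.
Qed.

Lemma tw_lang (S : set nat) r f a :
  (forall m, (m < r)%N -> f m = (m == a)) -> tw r f \in language (gap_shift S) r.
Proof.
move=> H; rewrite inE; apply/asboolP; exists (pt a); first exact: pt_in.
exists 0 => i; rewrite add0r tnth_mktuple H //= /pt eqz_nat.
Qed.

Lemma muE {R : realType} (mu : probability borel_fullshift R) {A : set borel_fullshift} :
  measurable A -> mu A = (fine (mu A))%:E.
Proof. by move=> mA; rewrite fineK // fin_num_measure. Qed.

Lemma mu_ge0 {R : realType} (mu : probability borel_fullshift R) (A : set borel_fullshift) :
  (0 <= fine (mu A))%R.
Proof. by apply: fine_ge0; apply: measure_ge0. Qed.

Lemma p2E (R : realType) (x : R) : powR 2 x = expR (x * ln 2).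
Proof. by rewrite /powR pnatr_eq0. Qed.

Lemma ln2_gt0 (R : realType) : (0 < ln (2 : R))%R.
Proof. by apply: ln_gt0; rewrite ltr1n. Qed.

Lemma case_nonpos (R : realType) (mu : probability borel_fullshift R) (S : set nat)
  (h c1 : R) : (0 < c1)%R -> (h <= 0)%R ->
  (forall r (w : r.-tuple bool), w \in language (gap_shift S) r ->
     (c1%:E <= mu (cylinder w : set borel_fullshift) * (powR 2 (r%:R * h))%:E)%E) ->
  False.
Proof.
move=> c1p h0 H.
pose zc j := (cylinder (tw j (fun _ => false)) : set borel_fullshift).
pose dc j := (cylinder (tw j.+1 (fun m => m == j)) : set borel_fullshift).
have mz j : measurable (zc j) by apply: cylinder_meas.
have md j : measurable (dc j) by apply: cylinder_meas.
have dec j : zc j = zc j.+1 `|` dc j.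
  apply/seteqP; split => x.
    move/cyl_tw => Hx; case Exj: (x j%:Z).
      right; apply/cyl_tw => m; rewrite ltnS leq_eqVlt => /orP[/eqP->|mj].
        by rewrite eqxx.
      by rewrite Hx // (ltn_eqF mj).
    left; apply/cyl_tw => m; rewrite ltnS leq_eqVlt => /orP[/eqP->//|mj].
    exact: Hx.
  case=> /cyl_tw Hx; apply/cyl_tw => m mj.
    by apply: Hx; exact: leqW mj.
  by rewrite Hx ?(ltn_eqF mj) // leqW.
have disj j : zc j.+1 `&` dc j = set0.
  apply/seteqP; split => x // [/cyl_tw Hz /cyl_tw Hd].
  by have := Hd j (ltnSn j); rewrite Hz // eqxx.
have lb j : (c1 <= fine (mu (dc j)))%R.
  have := H _ _ (@tw_lang S j.+1 (fun m => m == j) j (fun _ _ => erefl)).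
  rewrite (muE mu (md j)) -EFinM lee_fin => Hc.
  have p1 : (powR 2 (j.+1%:R * h) <= 1)%R.
    rewrite p2E expR_le1 pmulr_lle0 ?ln2_gt0 //.
    by rewrite mulr_ge0_le0 // ler0n.
  have p0 : (0 <= powR 2 (j.+1%:R * h))%R by apply: powR_ge0.
  have m0 := mu_ge0 mu (dc j).
  nra.
have rec j : (j%:R * c1 + fine (mu (zc j)) <= fine (mu (zc 0)))%R.
  elim: j => [|j IH]; first by rewrite mul0r add0r.
  apply: le_trans IH.
  have E : fine (mu (zc j)) = (fine (mu (zc j.+1)) + fine (mu (dc j)))%R.
    have E0 := measureU mu (mz j.+1) (md j) (disj j).
    rewrite -dec in E0; rewrite E0 fineD // fin_num_measure //.
  rewrite E -natr1 mulrDl mul1r.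
  have := lb j; lra.
have le1 : (fine (mu (zc 0)) <= 1)%R.
  by have := probability_le1 mu (mz 0); rewrite (muE mu (mz 0)) lee_fin.
pose N := Num.bound (c1^-1).
have := rec N.
have ic : (0 <= c1^-1)%R by rewrite invr_ge0 ltW.
have := archi_boundP ic.
rewrite -/N => HN.
have m0 := mu_ge0 mu (zc N).
have : (1 < N%:R * c1)%R.
  by rewrite -ltr_pdivrMr // div1r.
lra.
Qed.

Lemma mono_n (n : nat -> nat) : (forall i, (n i < n i.+1)%N) ->
  forall a b, (a <= b)%N -> (n a <= n b)%N.
Proof.
move=> inc a b; apply: (@homo_leq _ n leq) => //.
  exact: leq_trans.
by move=> k; exact: ltnW.
Qed.

Lemma key (n : nat -> nat) : (forall i, (n i < n i.+1)%N) -> forall i (x : fullshift),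
  gap_shift (range n) x -> (forall m, (m < n i + 2)%N -> x m%:Z = (m == 0)%N) ->
  forall m, (m < n i.+1 + 1)%N -> x m%:Z = (m == 0)%N.
Proof.
move=> inc i x Xx Ax m mb.
case: (ltnP m (n i + 2)) => [ma|am]; first exact: Ax.
have -> : (m == 0)%N = false by apply/negbTE; rewrite -lt0n; lia.
apply/negbTE/negP => xm.
have ex : exists k, (0 < k)%N && x k%:Z by exists m; rewrite xm andbT; lia.
case: (ex_minnP ex) => m0 /andP[m0p xm0] minm.
have m0le : (m0 <= m)%N by apply: minm; rewrite xm andbT; lia.
have m0a : (n i + 2 <= m0)%N.
  rewrite leqNgt; apply/negP => H; have := Ax m0 H.
  by rewrite xm0; case: m0 m0p {xm0 minm m0le H}.
have x0 : x 0 = true by rewrite (Ax 0%N) // addn2.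
have := Xx 0 m0%:Z _ x0 xm0.
case.
- lia.
- move=> k k0 km; have -> : k = (absz k)%:Z by lia.
  apply/negbTE/negP => xk.
  have := minm (absz k); rewrite xk andbT.
  have -> : (0 < absz k)%N by lia.
  move=> /(_ isT); lia.
move=> t _ nt.
have h1 : (n i < n t)%N by lia.
have h2 : (n t < n i.+1)%N by lia.
case: (leqP t i) => ti.
  by have := mono_n n inc _ _ ti; lia.
by have := mono_n n inc _ _ ti; lia.
Qed.

Lemma arith1 (a b M : nat) : (M < b - a)%N -> (b + 1 = (a + 2) + (b - a - 1))%N.
Proof. lia. Qed.

Lemma arith2 (a b M : nat) : (M < b - a)%N -> (M <= b - a - 1)%N.
Proof. lia. Qed.

Lemma case_pos (R : realType) (mu : probability borel_fullshift R) (n : nat -> nat)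
  (h c1 c2 : R) : (forall i, (n i < n i.+1)%N) ->
  (forall M : nat, exists i : nat, (M < n i.+1 - n i)%N) ->
  (0 < c1)%R -> (0 < c2)%R -> (0 < h)%R ->
  mu (gap_shift (range n) : set borel_fullshift) = 1%E ->
  (forall r (w : r.-tuple bool), w \in language (gap_shift (range n)) r ->
     (c1%:E <= mu (cylinder w : set borel_fullshift) * (powR 2 (r%:R * h))%:E)%E /\
     (mu (cylinder w : set borel_fullshift) * (powR 2 (r%:R * h))%:E <= c2%:E)%E) ->
  False.
Proof.
move=> inc gap c1p c2p hp muX G.
pose X : set borel_fullshift := gap_shift (range n).
have muX2 : mu X = 1%E by exact: muX.
have mX : measurable (X : set borel_fullshift) by apply: gap_shift_meas.
have mCX : mu (~` X) = 0%E.
  by rewrite probability_setC // muX2 subee.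
have l2 := @ln2_gt0 R.
have K : (0 < c1 * (h * ln 2))%R by rewrite !mulr_gt0.
have K0 : (0 <= c2 / (c1 * (h * ln 2)))%R by rewrite divr_ge0 // ltW.
have [i gi] := gap (Num.bound (c2 / (c1 * (h * ln 2)))).
have bM := archi_boundP K0.
set M := Num.bound _ in gi bM.
set a := n i in gi *; set b := n i.+1 in gi *.
pose A := (cylinder (tw (a + 2) (fun m => m == 0%N)) : set borel_fullshift).
pose B := (cylinder (tw (b + 1) (fun m => m == 0%N)) : set borel_fullshift).
have mA : measurable A by apply: cylinder_meas.
have mB : measurable B by apply: cylinder_meas.
have AB : (mu A <= mu B)%E.
  apply: (@le_trans _ _ (mu (B `|` ~` X))).
    apply: le_measure; rewrite ?inE //; first by apply: measurableU => //; apply: measurableC.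
    move=> x Ax; case: (pselect (X x)) => Xx; last by right.
    left; apply/cyl_tw; apply: (@key n inc i x Xx) => m mlt.
    by move/cyl_tw: Ax; apply.
  apply: le_trans (measureU2 mu mB _) _; first exact: measurableC.
  rewrite [X in (_ + X <= _)%E](_ : _ = 0%E) ?adde0 //.
have [GA1 _] := G _ _ (@tw_lang (range n) (a + 2) (fun m => m == 0%N) 0 (fun _ _ => erefl)).
have [_ GB2] := G _ _ (@tw_lang (range n) (b + 1) (fun m => m == 0%N) 0 (fun _ _ => erefl)).
rewrite -/A (muE mu mA) -EFinM lee_fin in GA1.
rewrite -/B (muE mu mB) -EFinM lee_fin in GB2.
rewrite (muE mu mA) (muE mu mB) lee_fin in AB.
set mA' := fine (mu A) in GA1 AB; set mB' := fine (mu B) in GB2 AB.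
have mA0 : (0 <= mA')%R by apply: mu_ge0.
have mB0 : (0 <= mB')%R by apply: mu_ge0.
pose g := (b - a - 1)%N.
have eb : (b + 1 = (a + 2) + g)%N by exact: arith1 gi.
set pA := powR 2 ((a + 2)%:R * h) in GA1.
set t := (g%:R * h * ln 2)%R.
set q := expR t.
have pB : powR 2 ((b + 1)%:R * h) = (pA * q)%R.
  rewrite /pA /q /t !p2E -expRD eb natrD; congr expR; ring.
rewrite pB in GB2.
have pA0 : (0 <= pA)%R by apply: powR_ge0.
have q0 : (0 <= q)%R by apply: expR_ge0.
have q1 : (1 + t <= q)%R by apply: expR_ge1Dx.
have gM : (M%:R <= g%:R :> R)%R by rewrite ler_nat; exact: arith2 gi.
have e1 : (c2 < c1 * t)%R.
  have : (c2 / (c1 * (h * ln 2)) < g%:R)%R by apply: lt_le_trans gM.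
  rewrite ltr_pdivrMr // => H; apply: lt_le_trans H _; rewrite le_eqVlt; apply/orP; left.
  by apply/eqP; rewrite /t; ring.
have e2 : (c1 * q <= mA' * pA * q)%R by apply: ler_wpM2r.
have e3 : (mA' * pA * q <= mB' * (pA * q))%R.
  by rewrite mulrA; apply: ler_wpM2r => //; apply: ler_wpM2r.
have e4 : (c1 * (1 + t) <= c1 * q)%R by apply: ler_wpM2l => //; exact: ltW.
rewrite mulrDr mulr1 in e4.
lra.
Qed.

Theorem corollary3p16 (R : realType) (n : nat -> nat) :
  (forall i, (0 < n i)%N) ->
  (forall i, (n i < n i.+1)%N) ->
  (forall M : nat, exists i : nat, (M < n i.+1 - n i)%N) ->
  ~ exists mu : probability borel_fullshift R,
      gibbs_state (gap_shift (range n)) mu.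
Proof.
move=> pos inc gap [mu [muX [c1 [c2 [c1p [c2p G]]]]]].
have [hle|hle] := leP (@entropy R (gap_shift (range n))) 0%R.
  apply: (case_nonpos _ mu (range n) _ _ c1p hle) => r w Hw; exact: (G r w Hw).1.
exact: (case_pos _ mu n _ _ _ inc gap c1p c2p hle muX G).
Qed.
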